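(* Let $a_1,\dots,a_m\in\{0,1\}^n$ and $\epsilon_1,\dots,\epsilon_m\in\{0,1\}$, and consider the system of $\mathbb{F}_2$-linear equations $a_j\cdot b=\epsilon_j$ ($1\le j\le m$) in the unknown $b\in\{0,1\}^n$. Run the Triangular Basis Algorithm, with dimension $n+1$, on the vectors $x_j=a_j\Vert\epsilon_j\in\{0,1\}^{n+1}$. Then the system has a solution if and only if $av_{n+1}=1$ at the end of the algorithm.
   Context: All arithmetic is over $\mathbb{F}_2$ ($+$ is XOR, $\wedge$ is AND, $\cdot$ is the standard dot product). For a vector $v\in\{0,1\}^N$, $v[i]$ is its $i$-th bit and $v[a..b]$ the substring of bits $a$ through $b$ (empty if $a>b$); $\Vert$ is concatenation. Triangular Basis Algorithm (for vectors of length $N$). Input: $x_1,\dots,x_m\in\{0,1\}^N$ (modified in place). Auxiliary variables: bits $\mathrm{used}_j$ ($1\le j\le m$) initialized to $0$; bits $av_i$ ($1\le i\le N$) initialized to $1$; strings $b_i[(i+1)..N]$ ($1\le i\le N$) initialized to all zeros. The algorithm executes, for $i=1,\dots,N$ (outer loop) and, inside it, for $j=1,\dots,m$ (inner loop), the following four steps in order (iteration $(i,j)$): (1) $\mathrm{used}_j \leftarrow \mathrm{used}_j + (x_j[i]\wedge av_i)$; (2) $av_i\leftarrow av_i + (x_j[i]\wedge \mathrm{used}_j)$ (using the value of $\mathrm{used}_j$ just updated); (3) if $\mathrm{used}_j=1$: $b_i[(i+1)..N]\leftarrow b_i[(i+1)..N]+x_j[(i+1)..N]$; (4) if $x_j[i]=1$: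 $x_j[(i+1)..N]\leftarrow x_j[(i+1)..N]+b_i[(i+1)..N]$. *)

(* Defs.v *)
(* F_2 is modelled by bool: + is xor (addb), wedge is andb. *)
From mathcomp Require Import all_boot.
Set Implicit Arguments. Unset Strict Implicit. Unset Printing Implicit Defensive.

(* All indices are 1-based natural numbers, as in the paper.
   A vector v in {0,1}^N is a function nat -> bool of which only the entries
   v 1, ..., v N are meaningful. A family x_1..x_m is a function
   x : nat -> nat -> bool with x j k = x_j[k]. *)

Record tba_state := TBAState {
  st_x    : nat -> nat -> bool;
  st_used : nat -> bool;
  st_av   : nat -> bool;
  st_b    : nat -> nat -> bool   (* st_b i k = b_i[k], meaningful for i<k<=N *)
}.

Definition tba_init (x : nat -> nat -> bool) : tba_state :=
  TBAState x (fun _ => false) (fun _ => true) (fun _ _ => false).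

Definition tba_step (N : nat) (s : tba_state) (i j : nat) : tba_state :=
  let x := st_x s in let used := st_used s in
  let av := st_av s in let b := st_b s in
  let used1 := fun j' => if j' == j then used j (+) (x j i && av i) else used j' in
  let av1 := fun i' => if i' == i then av i (+) (x j i && used1 j) else av i' in
  let b1 := fun i' k => if (i' == i) && used1 j && (i < k <= N)
                        then b i k (+) x j k else b i' k in
  let x1 := fun j' k => if (j' == j) && x j i && (i < k <= N)
                        then x j k (+) b1 i k else x j' k in
  TBAState x1 used1 av1 b1.

Definition tba_run (N m : nat) (x : nat -> nat -> bool) : tba_state :=
  foldl (fun s i => foldl (fun s' j => tba_step N s' i j) s (iota 1 m))
        (tba_init x) (iota 1 N).

Definition dotF2 (n : nat) (a b : nat -> bool) : bool :=
  \big[addb/false]_(1 <= k < n.+1) (a k && b k).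

Definition concat_bit (n : nat) (a : nat -> bool) (e : bool) : nat -> bool :=
  fun k => if k <= n then a k else if k == n.+1 then e else false.

(* Main.v *)
Require Import Defs.
From mathcomp Require Import all_boot zify.

Definition sumr (lo N : nat) (F : nat -> bool) := \big[addb/false]_(lo <= k < N.+1) F k.

Definition Orig N m (x0 : nat -> nat -> bool) (y : nat -> bool) :=
  forall j', 1 <= j' <= m -> sumr 1 N (fun k => x0 j' k && y k) = false.

Definition Cons N m (s : tba_state) i j (y : nat -> bool) :=
  (forall i', 1 <= i' <= N -> st_av s i' = false ->
     y i' = sumr i'.+1 N (fun k => st_b s i' k && y k)) /\
  (forall j', 1 <= j' <= m -> st_used s j' = false ->
     sumr (if j' < j then i.+1 else i) N (fun k => st_x s j' k && y k) = false).

Definition Inv N m x0 s i j :=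
  (forall y, Orig N m x0 y <-> Cons N m s i j y) /\
  (forall i', i < i' -> st_av s i' = true) /\
  (forall i' k, i <= i' -> st_av s i' = true -> st_b s i' k = false) /\
  (forall j' k, st_used s j' = true -> i < k <= N -> st_x s j' k = false) /\
  (forall j' k, st_used s j' = true -> j <= j' -> i <= k <= N -> st_x s j' k = false).

Lemma sumr_first lo N F : lo <= N -> sumr lo N F = F lo (+) sumr lo.+1 N F.
Proof. by move=> h; rewrite /sumr big_ltn. Qed.

Lemma sumr_empty N F : sumr N.+1 N F = false.
Proof. by rewrite /sumr big_geq. Qed.

Lemma sumr_ext lo N F G : (forall k, lo <= k <= N -> F k = G k) -> sumr lo N F = sumr lo N G.
Proof. move=> h; apply: eq_big_nat => k /andP[a b]; apply: h; by rewrite a -ltnS b. Qed.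

Lemma sumr_xor lo N F G : sumr lo N (fun k => F k (+) G k) = sumr lo N F (+) sumr lo N G.
Proof. by rewrite /sumr big_split. Qed.

Lemma lo_if j' j i : (if j' < j.+1 then i.+1 else i) =
  if j' == j then i.+1 else if j' < j then i.+1 else i.
Proof. by rewrite ltnS leq_eqVlt; case: (j' == j). Qed.

Lemma unchanged_inv N m x0 s s' i j : 1 <= i <= N -> 1 <= j <= m ->
  (forall j', st_used s' j' = st_used s j') -> (forall i', st_av s' i' = st_av s i') ->
  (forall i' k, st_b s' i' k = st_b s i' k) -> (forall j' k, st_x s' j' k = st_x s j' k) ->
  (st_used s j = true \/ st_x s j i = false) ->
  Inv N m x0 s i j -> Inv N m x0 s' i j.+1.
Proof.
move=> /andP[i1 iN] /andP[j1 jm] Eu Ea Eb Ex Hj [HA [HB [HC [HD HD']]]].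
have Sb : forall i' y, sumr i'.+1 N (fun k => st_b s' i' k && y k) = sumr i'.+1 N (fun k => st_b s i' k && y k).
  by move=> i' y; apply: sumr_ext => k _; rewrite Eb.
have Sx : forall lo j' y, sumr lo N (fun k => st_x s' j' k && y k) = sumr lo N (fun k => st_x s j' k && y k).
  by move=> lo j' y; apply: sumr_ext => k _; rewrite Ex.
split; last split; last split; last split.
- move=> y; apply: iff_trans (HA y) _; rewrite /Cons; split=> -[P R]; split.
  + by move=> i' hi'; rewrite Ea Sb; apply: P.
  + move=> j' hj'; rewrite Eu Sx lo_if => U; have := R j' hj' U.
    case: (eqVneq j' j) U => [-> U|//]; rewrite ltnn.
    by case: Hj => [|X]; [rewrite U | rewrite sumr_first // X].
  + by move=> i' hi'; rewrite -Ea -Sb; apply: P.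
  + move=> j' hj' U; have := R j' hj'; rewrite Eu Sx lo_if => /(_ U).
    case: (eqVneq j' j) U => [-> U|//]; rewrite ltnn.
    by case: Hj => [h|X]; [rewrite h in U | move=> ?; rewrite sumr_first // X].
- by move=> i' h; rewrite Ea; apply: HB.
- by move=> i' k h; rewrite Ea Eb; apply: HC.
- by move=> j' k; rewrite Eu Ex; apply: HD.
- by move=> j' k; rewrite Eu Ex => U h; apply: HD' => //; apply: ltnW.
Qed.

Lemma pivot_inv N m x0 s s' i j : 1 <= i <= N -> 1 <= j <= m ->
  st_used s j = false -> st_x s j i = true -> st_av s i = true ->
  (forall j', st_used s' j' = if j' == j then true else st_used s j') ->
  (forall i', st_av s' i' = if i' == i then false else st_av s i') ->
  (forall i' k, st_b s' i' k = if (i' == i) && (i < k <= N) then st_x s j k else st_b s i' k) ->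
  (forall j' k, st_x s' j' k = if (j' == j) && (i < k <= N) then false else st_x s j' k) ->
  Inv N m x0 s i j -> Inv N m x0 s' i j.+1.
Proof.
move=> /andP[i1 iN] /andP[j1 jm] Uj Xji Avi Eu Ea Eb Ex [HA [HB [HC [HD HD']]]].
have Sbi : forall y, sumr i.+1 N (fun k => st_b s' i k && y k) = sumr i.+1 N (fun k => st_x s j k && y k).
  by move=> y; apply: sumr_ext => k hk; rewrite Eb eqxx hk.
have Sb : forall i' y, i' != i -> sumr i'.+1 N (fun k => st_b s' i' k && y k) = sumr i'.+1 N (fun k => st_b s i' k && y k).
  by move=> i' y ne; apply: sumr_ext => k _; rewrite Eb (negbTE ne).
have Sx : forall lo j' y, j' != j -> sumr lo N (fun k => st_x s' j' k && y k) = sumr lo N (fun k => st_x s j' k && y k).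
  by move=> lo j' y ne; apply: sumr_ext => k _; rewrite Ex (negbTE ne).
have Rj : forall y, (sumr i N (fun k => st_x s j k && y k) = false) <-> (y i = sumr i.+1 N (fun k => st_x s j k && y k)).
  move=> y; rewrite sumr_first // Xji /=.
  by case: (y i); case: (sumr _ _ _).
split; last split; last split; last split.
- move=> y; apply: iff_trans (HA y) _; rewrite /Cons; split=> -[P R]; split.
  + move=> i' hi'; rewrite Ea; case: eqP => [-> _|/eqP ne Av]; last by rewrite Sb //; apply: P.
    rewrite Sbi; apply/Rj; have := R j ltac:(by rewrite j1 jm) Uj; by rewrite ltnn.
  + move=> j' hj'; rewrite Eu lo_if; case: eqP => [//|/eqP ne] U.
    by rewrite Sx //; apply: R.
  + move=> i' hi' Av; have := P i' hi'; rewrite Ea; case: (eqVneq i' i) Av => [->|ne] Av.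
      by rewrite Avi in Av.
    by rewrite Sb //; apply.
  + move=> j' hj' U; case: (eqVneq j' j) => [->|ne].
      rewrite ltnn; apply/Rj; rewrite -Sbi; apply: P; first by rewrite i1 iN.
      by rewrite Ea eqxx.
    have := R j' hj'; rewrite Eu lo_if (negbTE ne) Sx // => /(_ U); done.
- by move=> i' h; rewrite Ea (gtn_eqF h); apply: HB.
- move=> i' k h; rewrite Ea Eb; case: eqP => [//|_]; exact: HC.
- move=> j' k; rewrite Eu Ex; case: eqP => [_ _ -> //|_ U hk]; exact: HD.
- move=> j' k; rewrite Eu Ex; case: eqP => [->|_ U h hk]; first by rewrite ltnn.
  by apply: HD' => //; apply: ltnW.
Qed.

Lemma elim_inv N m x0 s s' i j : 1 <= i <= N -> 1 <= j <= m ->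
  st_used s j = false -> st_x s j i = true -> st_av s i = false ->
  (forall j', st_used s' j' = st_used s j') -> (forall i', st_av s' i' = st_av s i') ->
  (forall i' k, st_b s' i' k = st_b s i' k) ->
  (forall j' k, st_x s' j' k = if (j' == j) && (i < k <= N) then st_x s j k (+) st_b s i k else st_x s j' k) ->
  Inv N m x0 s i j -> Inv N m x0 s' i j.+1.
Proof.
move=> /andP[i1 iN] /andP[j1 jm] Uj Xji Avi Eu Ea Eb Ex [HA [HB [HC [HD HD']]]].
have Sb : forall i' y, sumr i'.+1 N (fun k => st_b s' i' k && y k) = sumr i'.+1 N (fun k => st_b s i' k && y k).
  by move=> i' y; apply: sumr_ext => k _; rewrite Eb.
have Sx : forall lo j' y, j' != j -> sumr lo N (fun k => st_x s' j' k && y k) = sumr lo N (fun k => st_x s j' k && y k).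
  by move=> lo j' y ne; apply: sumr_ext => k _; rewrite Ex (negbTE ne).
have Sxj : forall y, sumr i.+1 N (fun k => st_x s' j k && y k) =
    sumr i.+1 N (fun k => st_x s j k && y k) (+) sumr i.+1 N (fun k => st_b s i k && y k).
  move=> y; rewrite -sumr_xor; apply: sumr_ext => k hk; by rewrite Ex eqxx hk andb_addl.
have Rj : forall y, y i = sumr i.+1 N (fun k => st_b s i k && y k) ->
   (sumr i N (fun k => st_x s j k && y k) = false) <-> (sumr i.+1 N (fun k => st_x s' j k && y k) = false).
  move=> y Pi; rewrite Sxj sumr_first // Xji /= Pi.
  by case: (sumr _ _ (fun k => st_b s i k && y k)); case: (sumr _ _ _).
have Pi : forall y, (forall i', 1 <= i' <= N -> st_av s i' = false ->
     y i' = sumr i'.+1 N (fun k => st_b s i' k && y k)) -> y i = sumr i.+1 N (fun k => st_b s i k && y k).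
  by move=> y P; apply: P => //; rewrite i1 iN.
split; last split; last split; last split.
- move=> y; apply: iff_trans (HA y) _; rewrite /Cons; split=> -[P R]; split.
  + by move=> i' hi'; rewrite Ea Sb; apply: P.
  + move=> j' hj'; rewrite Eu lo_if; case: (eqVneq j' j) hj' => [->|ne] hj' U.
      by apply/(Rj y (Pi y P)); have := R j hj' U; rewrite ltnn.
    by rewrite Sx //; apply: R.
  + by move=> i' hi'; rewrite -Ea -Sb; apply: P.
  + have P0 : forall i', 1 <= i' <= N -> st_av s i' = false ->
       y i' = sumr i'.+1 N (fun k => st_b s i' k && y k).
      by move=> i' hi'; rewrite -Ea -Sb; apply: P.
    move=> j' hj' U; case: (eqVneq j' j) => [->|ne].
      rewrite ltnn; apply/(Rj y (Pi y P0)); have := R j; rewrite Eu lo_if eqxx.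
      by apply; [rewrite j1 jm | rewrite Uj].
    have := R j' hj'; rewrite Eu lo_if (negbTE ne) Sx // => /(_ U); done.
- by move=> i' h; rewrite Ea; apply: HB.
- by move=> i' k h; rewrite Ea Eb; apply: HC.
- move=> j' k; rewrite Eu Ex; case: eqP => [-> |_ U hk]; first by rewrite Uj.
  exact: HD.
- move=> j' k; rewrite Eu Ex; case: eqP => [->|_ U h hk]; first by rewrite Uj.
  by apply: HD' => //; apply: ltnW.
Qed.

Lemma step_inv N m x0 s i j : 1 <= i <= N -> 1 <= j <= m ->
  Inv N m x0 s i j -> Inv N m x0 (tba_step N s i j) i j.+1.
Proof.
move=> hi hj H; have H0 := H; case: H0 => [_ [_ [HC [HD HD']]]].
move: (hi) => /andP[i1 iN].
case: s H HC HD HD' => x u av b H /= HC HD HD'.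
case Uj: (u j).
  have Xji : x j i = false by apply: HD' => //; rewrite leqnn iN.
  apply: unchanged_inv H => //=; try by left.
  - by move=> j'; case: eqP => [->|//]; rewrite Xji /= addbF.
  - by move=> i'; case: eqP => [->|//]; rewrite Xji /= addbF.
  - move=> i' k; rewrite Xji Uj eqxx /=; case: eqP => [->|//] /=.
    case: ifP => // /andP[h1 h2]; by rewrite HD ?h1 ?h2 ?addbF.
  - by move=> j' k; rewrite Xji /= andbF.
case Xji: (x j i).
  case Avi: (av i).
    apply: pivot_inv H => //=.
    - by move=> j'; rewrite Xji Avi Uj; case: eqP.
    - by move=> i'; rewrite Xji Avi Uj eqxx; case: eqP.
    - move=> i' k; rewrite Xji Uj Avi eqxx /=; case: eqP => //= ->.
      by case: ifP => // _; rewrite HC ?Avi.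
    - move=> j' k; rewrite Xji Uj Avi !eqxx /=; case: eqP => //= ->.
      by case: (i < k <= N) => //=; rewrite HC ?Avi // addFb addbb.
  apply: elim_inv H => //=.
  - by move=> j'; rewrite Xji Avi Uj; case: eqP => //= ->.
  - by move=> i'; rewrite Xji Avi Uj eqxx; case: eqP => //= ->.
  - by move=> i' k; rewrite Xji Uj Avi eqxx /= andbF.
  - by move=> j' k; rewrite Xji Uj Avi !eqxx /= andbT; case: (_ && _).
apply: unchanged_inv H => //=; try by right.
- by move=> j'; rewrite Xji Uj; case: eqP => //= ->.
- by move=> i'; rewrite Xji; case: eqP => //= ->; rewrite addbF.
- by move=> i' k; rewrite Xji Uj eqxx /= andbF.
- by move=> j' k; rewrite Xji /= andbF.
Qed.

Lemma trans_inv N m x0 s i : Inv N m x0 s i m.+1 -> Inv N m x0 s i.+1 1.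
Proof.
move=> [HA [HB [HC [HD HD']]]]; split; last split; last split; last split.
- move=> y; split=> [/HA [P R] | [P R]].
    split=> // j' /andP[j1 jm] U.
    have := R j' ltac:(by rewrite j1 jm) U; have -> : (j' < 1) = false by case: (j') j1.
    by have -> : j' < m.+1 by [].
  apply (proj2 (HA y)); split=> // j' /andP[j1 jm] U.
  have := R j' ltac:(by rewrite j1 jm) U; have -> : (j' < 1) = false by case: (j') j1.
    by have -> : j' < m.+1 by [].
- by move=> i' h; apply: HB; apply: ltnW.
- by move=> i' k h; apply: HC; apply: ltnW.
- by move=> j' k U /andP[a b]; apply: HD => //; rewrite (ltn_trans _ a).
- by move=> j' k U _; apply: HD.
Qed.

Lemma inner_inv N m x0 i : 1 <= i <= N -> forall t s j, 1 <= j -> j + t <= m.+1 ->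
  Inv N m x0 s i j ->
  Inv N m x0 (foldl (fun s' j => tba_step N s' i j) s (iota j t)) i (j + t).
Proof.
move=> hi; elim=> [|t IH] s j j1 hjt H /=; first by rewrite addn0.
rewrite -addSnnS; apply: IH => //; first by rewrite addSnnS.
apply: step_inv => //; rewrite j1 /=; rewrite -ltnS; apply: leq_trans hjt.
by rewrite addnS ltnS leq_addr.
Qed.

Lemma outer_inv N m x0 : forall t s i, 1 <= i -> i + t <= N.+1 ->
  Inv N m x0 s i 1 ->
  Inv N m x0 (foldl (fun s i => foldl (fun s' j => tba_step N s' i j) s (iota 1 m)) s (iota i t)) (i + t) 1.
Proof.
elim=> [|t IH] s i i1 hit H /=; first by rewrite addn0.
rewrite -addSnnS; apply: IH => //; first by rewrite addSnnS.
apply: trans_inv; rewrite -add1n.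
apply: inner_inv => //; rewrite i1 /=; rewrite -ltnS; apply: leq_trans hit.
by rewrite addnS ltnS leq_addr.
Qed.

Lemma init_inv N m x0 : Inv N m x0 (tba_init x0) 1 1.
Proof.
split; last by split.
move=> y; split.
- move=> H; split=> // j' /andP[j1 jm] _.
  have -> : (j' < 1) = false by case: (j') j1.
  by apply: H; rewrite j1 jm.
- move=> [_ R] j' /andP[j1 jm]; have := R j' ltac:(by rewrite j1 jm) erefl.
  by have -> : (j' < 1) = false by case: (j') j1.
Qed.

Lemma run_inv N m x0 : Inv N m x0 (tba_run N m x0) N.+1 1.
Proof.
rewrite /tba_run -add1n; apply: outer_inv => //; exact: init_inv.
Qed.

Lemma build N (av : nat -> bool) (b : nat -> nat -> bool) : 1 <= N -> av N = true ->
  forall t, exists y : nat -> bool, y N = true /\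
   forall i', N - t <= i' <= N -> av i' = false -> y i' = sumr i'.+1 N (fun k => b i' k && y k).
Proof.
move=> N1 avN; elim=> [|t [y [yN Hy]]].
  exists (fun _ => true); split=> // i'; rewrite subn0 -eqn_leq => /eqP <-.
  by rewrite avN.
pose p := N - t.+1.
have pN : p < N by rewrite /p; lia.
exists (fun k => if k == p then sumr p.+1 N (fun k => b p k && y k) else y k).
split; first by rewrite gtn_eqF.
move=> i' /andP[pi iN] avi.
case: (ltngtP i' p) => [|hlt|->]; first by rewrite ltnNge pi.
- rewrite Hy //; last by rewrite iN andbT; move: hlt; rewrite /p; lia.
  apply: sumr_ext => k /andP[a _]; rewrite gtn_eqF //; exact: ltn_trans hlt a.
- apply: sumr_ext => k /andP[a _]; by rewrite gtn_eqF.
Qed.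

Lemma concat_sum n (a : nat -> bool) e (y : nat -> bool) :
  sumr 1 n.+1 (fun k => concat_bit n a e k && y k) = dotF2 n a y (+) (e && y n.+1).
Proof.
rewrite /sumr big_nat_recr //= /concat_bit ltnn eqxx /dotF2; congr addb.
by apply: eq_big_nat => k /andP[_ h]; rewrite -ltnS h.
Qed.

Theorem mainTheorem7 (n m : nat) (a : nat -> nat -> bool) (eps : nat -> bool) :
  (exists b : nat -> bool, forall j, 1 <= j <= m -> dotF2 n (a j) b = eps j)
  <->
  st_av (tba_run n.+1 m (fun j => concat_bit n (a j) (eps j))) n.+1 = true.
Proof.
have [HA _] := run_inv n.+1 m (fun j => concat_bit n (a j) (eps j)).
set s := tba_run _ _ _ in HA *.
split.
- move=> [b Hb].
  pose y := fun k => if k <= n then b k else true.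
  have Oy : Orig n.+1 m (fun j => concat_bit n (a j) (eps j)) y.
    move=> j hj; rewrite concat_sum.
    have -> : dotF2 n (a j) y = dotF2 n (a j) b.
      by apply: eq_big_nat => k /andP[_ h]; rewrite /y -ltnS h.
    by rewrite Hb // /y ltnn andbT addbb.
  have [P _] := proj1 (HA y) Oy.
  case avN: (st_av s n.+1) => //.
  have := P n.+1 (leqnn _) avN; by rewrite sumr_empty /y ltnn.
- move=> avN.
  have [y [yN Hy]] := build n.+1 (st_av s) (st_b s) (ltn0Sn n) avN n.+1.
  have Cy : Cons n.+1 m s n.+2 1 y.
    split; first by move=> i' /andP[h1 h2]; apply: Hy; rewrite subnn h2.
    move=> j' /andP[j1 _] _; have -> : (j' < 1) = false by case: (j') j1.
    exact: sumr_empty.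
  exists y => j hj; have := proj2 (HA y) Cy j hj.
  by rewrite concat_sum yN andbT; case: (dotF2 _ _ _); case: (eps j).
Qed.
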